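(* Let $X$ be a set and let $\mathcal P$ be a ring of subsets of $X$ (closed under finite intersections and finite unions) such that $\mathcal P\subseteq\mathcal P_{seq}$. Then the $\mathcal Q_{\mathcal P}$-topology on $X/\mathcal P$ is completely regular.
   Context: $[x]_{\mathcal P}=\{y\in X:\forall V\in\mathcal P\ (x\in V\iff y\in V)\}$, $X/\mathcal P=\{[x]_{\mathcal P}:x\in X\}$, $q(x)=[x]_{\mathcal P}$, and the $\mathcal Q_{\mathcal P}$-topology is the coarsest topology on $X/\mathcal P$ containing all sets $q[V]=\{[x]_{\mathcal P}:x\in V\}$, $V\in\mathcal P$. $\mathcal P_{seq}$ is the family of all sets $W$ for which there exist sequences $\{U_n\}_{n\in\omega}\subseteq\mathcal P$ and $\{V_n\}_{n\in\omega}\subseteq\mathcal P$ with $U_k\subseteq X\setminus V_k\subseteq U_{k+1}$ for every $k$ and $\bigcup_nU_n=W$. Completely regular spaces are assumed $T_1$. *)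

(* Defs.v *)
From Stdlib Require Import Reals.
From Stdlib Require Export Rtopology.
Open Scope R_scope.

Section Defs.
Context {X : Type}.

Definition ring_of_sets (P : (X -> Prop) -> Prop) : Prop :=
  forall A B, P A -> P B ->
    P (fun x => A x /\ B x) /\ P (fun x => A x \/ B x).

Definition P_seq (P : (X -> Prop) -> Prop) (W : X -> Prop) : Prop :=
  exists (U V : nat -> X -> Prop),
    (forall n, P (U n)) /\ (forall n, P (V n)) /\
    (forall k x, U k x -> ~ V k x) /\
    (forall k x, ~ V k x -> U (S k) x) /\
    (forall x, W x <-> exists n, U n x).

Definition cls (P : (X -> Prop) -> Prop) (x : X) : X -> Prop :=
  fun y => forall V, P V -> (V x <-> V y).

Definition quot (P : (X -> Prop) -> Prop) : Type :=
  { C : X -> Prop | exists x, C = cls P x }.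

Definition qmap (P : (X -> Prop) -> Prop) (x : X) : quot P :=
  exist _ (cls P x) (ex_intro _ x eq_refl).

Definition qimage (P : (X -> Prop) -> Prop) (V : X -> Prop) : quot P -> Prop :=
  fun c => exists x, V x /\ c = qmap P x.
End Defs.

Definition is_topology {Y : Type} (T : (Y -> Prop) -> Prop) : Prop :=
  T (fun _ => True) /\ T (fun _ => False) /\
  (forall U V, T U -> T V -> T (fun y => U y /\ V y)) /\
  (forall F : (Y -> Prop) -> Prop, (forall U, F U -> T U) ->
      T (fun y => exists U, F U /\ U y)).

(* Open sets of the Q_P-topology: the coarsest topology on X/P containing
   all q[V], V in P (intersection of all such topologies). *)
Definition Q_open {X : Type} (P : (X -> Prop) -> Prop) (U : quot P -> Prop) : Prop :=
  forall T : (quot P -> Prop) -> Prop, is_topology T ->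
    (forall V, P V -> T (qimage P V)) -> T U.

(* Complete regularity (with T1) of the topology with open sets O. *)
Definition completely_regular {Y : Type} (O : (Y -> Prop) -> Prop) : Prop :=
  (forall y : Y, O (fun z => z <> y)) /\
  (forall (F : Y -> Prop) (x : Y), O (fun z => ~ F z) -> ~ F x ->
     exists f : Y -> R,
       (forall A : R -> Prop, open_set A -> O (fun y => A (f y))) /\
       (forall y, 0 <= f y <= 1) /\ f x = 0 /\ (forall y, F y -> f y = 1)).

(* Main.v *)
Require Import Defs.
From Stdlib Require Import Reals Lra Lia Classical ClassicalEpsilon FunctionalExtensionality PropExtensionality ProofIrrelevance PeanoNat Cantor.
Open Scope R_scope.

Definition ringB {Y : Type} (B : (Y->Prop)->Prop) := forall a b, B a -> B b ->
  B (fun y => a y /\ b y) /\ B (fun y => a y \/ b y).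
Definition seqB {Y : Type} (B : (Y->Prop)->Prop) := forall W, B W ->
  exists (U V : nat -> Y -> Prop), (forall n, B (U n)) /\ (forall n, B (V n)) /\
   (forall k y, U k y -> ~ V k y) /\ (forall k y, ~ V k y -> U (S k) y) /\
   (forall y, W y <-> exists n, U n y).
Definition sepB {Y : Type} (B : (Y->Prop)->Prop) :=
  forall y z : Y, y <> z -> exists b, B b /\ ~ (b y <-> b z).
Definition Oabs {Y : Type} (B : (Y->Prop)->Prop) (U : Y -> Prop) :=
  forall T, is_topology T -> (forall S, B S -> T S) -> T U.
Definition isOpen {Y : Type} (B : (Y->Prop)->Prop) (U : Y -> Prop) :=
  forall y, U y -> exists b, B b /\ b y /\ forall z, b z -> U z.

Lemma Oabs_of {Y} (B : (Y->Prop)->Prop) U :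
  ((forall y, U y) \/ isOpen B U) -> Oabs B U.
Proof.
  intros H T [Htrue [Hfalse [Hint Hun]]] HB. destruct H as [Hf|Ho].
  - replace U with (fun _:Y => True); auto.
    extensionality y; apply propositional_extensionality; split; auto.
  - set (F := fun S => B S /\ forall z, S z -> U z).
    replace U with (fun y => exists S, F S /\ S y).
    + apply Hun. intros S [HS _]; auto.
    + extensionality y; apply propositional_extensionality; split.
      * intros [S [[_ HS] Sy]]; auto.
      * intros Uy; destruct (Ho y Uy) as [b [Bb [hb Hb]]]; exists b; unfold F; auto.
Qed.

Lemma Oabs_T0 {Y} (B : (Y->Prop)->Prop) U : ringB B -> Oabs B U ->
  (forall y, U y) \/ isOpen B U.
Proof.
  intros Hr HU. apply (HU (fun U => (forall y, U y) \/ isOpen B U)).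
  - split; [left; auto|]. split; [right; intros y []|]. split.
    + intros U1 U2 [H1|H1] [H2|H2].
      * left; auto.
      * right. intros y [a b]. destruct (H2 y b) as [c [Bc [cy Hc]]].
        exists c; repeat split; auto.
      * right. intros y [a b]. destruct (H1 y a) as [c [Bc [cy Hc]]].
        exists c; repeat split; auto.
      * right. intros y [a b0]. destruct (H1 y a) as [c1 [Bc1 [c1y Hc1]]].
        destruct (H2 y b0) as [c2 [Bc2 [c2y Hc2]]].
        exists (fun z => c1 z /\ c2 z). split; [apply (Hr _ _ Bc1 Bc2)|].
        split; auto. intros z [h1 h2]; auto.
    + intros F HF. destruct (classic (exists U, F U /\ forall y, U y)) as [[U0 [FU0 HU0]]|Hn].
      * left; intros y; exists U0; auto.
      * right. intros y [U0 [FU0 U0y]]. destruct (HF U0 FU0) as [Hfull|Ho].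
        -- exfalso; apply Hn; eauto.
        -- destruct (Ho y U0y) as [c [Bc [cy Hc]]]. exists c; repeat split; auto.
           intros z cz; exists U0; auto.
  - intros S BS. right. intros y Sy. exists S; auto.
Qed.

Definition good {Y : Type} (B : (Y->Prop)->Prop) (W : Y -> Prop) :=
  exists s : nat -> Y -> Prop, (forall n, B (s n)) /\ forall y, W y <-> exists n, s n y.

Lemma good_open {Y} (B : (Y->Prop)->Prop) W : good B W -> isOpen B W.
Proof.
  intros [s [Bs Hs]] y Wy. destruct (proj1 (Hs y) Wy) as [n hn].
  exists (s n); repeat split; auto. intros z hz; apply Hs; eauto.
Qed.

Lemma good_B {Y} (B : (Y->Prop)->Prop) b : B b -> good B b.
Proof.
  intros Bb. exists (fun _ => b); split; auto. intros y; split; [intros h; exists 0%nat; auto|intros [_ h]; auto].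
Qed.

Lemma good_goodK {Y} (B : (Y->Prop)->Prop) W : seqB B -> good B W ->
  exists O K : nat -> Y -> Prop, (forall n, B (O n)) /\ (forall n, B (K n)) /\
   (forall n y, O n y -> ~ K n y) /\ (forall n y, W y \/ K n y) /\
   (forall y, W y <-> exists n, O n y).
Proof.
  intros Hs [s [Bs Hw]].
  destruct (choice (fun (a : nat) (p : (nat -> Y -> Prop) * (nat -> Y -> Prop)) =>
     (forall n, B (fst p n)) /\ (forall n, B (snd p n)) /\
     (forall k y, fst p k y -> ~ snd p k y) /\ (forall k y, ~ snd p k y -> fst p (S k) y) /\
     (forall y, s a y <-> exists n, fst p n y))) as [f Hf].
  { intros a. destruct (Hs (s a) (Bs a)) as [U [V H]]. exists (U, V); exact H. }
  exists (fun k => fst (f (fst (of_nat k))) (snd (of_nat k))).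
  exists (fun k => snd (f (fst (of_nat k))) (snd (of_nat k))).
  split; [intros k; apply (Hf _)|]. split; [intros k; apply (Hf _)|].
  split; [intros k y; apply (Hf _)|]. split.
  - intros k y. destruct (classic (snd (f (fst (of_nat k))) (snd (of_nat k)) y)) as [h|h]; [right; auto|left].
    apply Hw. exists (fst (of_nat k)). apply (Hf (fst (of_nat k))).
    exists (S (snd (of_nat k))). apply (Hf _). auto.
  - intros y; split.
    + intros Wy. destruct (proj1 (Hw y) Wy) as [a ha].
      destruct (proj1 (proj2 (proj2 (proj2 (proj2 (Hf a)))) y) ha) as [b hb].
      exists (to_nat (a, b)). rewrite cancel_of_to. simpl. auto.
    + intros [k hk]. apply Hw. exists (fst (of_nat k)). apply (Hf _). eauto.
Qed.

Fixpoint Kc {Y} (K : nat -> Y -> Prop) (k : nat) : Y -> Prop :=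
  match k with 0%nat => K 0%nat | S k' => fun y => Kc K k' y /\ K (S k') y end.

Lemma Kc_B {Y} (B : (Y->Prop)->Prop) K k : ringB B -> (forall n, B (K n)) -> B (Kc K k).
Proof. intros Hr HK. induction k; simpl; auto. apply Hr; auto. Qed.

Lemma Kc_spec {Y} (K : nat -> Y -> Prop) k y : Kc K k y -> forall j, (j <= k)%nat -> K j y.
Proof.
  induction k; simpl; intros H j Hj.
  - replace j with 0%nat by lia; auto.
  - destruct H as [H1 H2]. destruct (Nat.eq_dec j (S k)) as [->|Hne]; auto.
    apply IHk; auto; lia.
Qed.

Lemma Kc_intro {Y} (K : nat -> Y -> Prop) k y : (forall j, K j y) -> Kc K k y.
Proof. intros H; induction k; simpl; auto. Qed.

Lemma interp {Y} (B : (Y->Prop)->Prop) W W' : ringB B -> seqB B -> good B W -> good B W' ->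
  (forall y, W y \/ W' y) ->
  exists G H, good B G /\ good B H /\ (forall y, G y -> H y -> False) /\
    (forall y, G y \/ W' y) /\ (forall y, H y \/ W y).
Proof.
  intros Hr Hs gW gW' Hc.
  destruct (good_goodK B W Hs gW) as [O [K [BO [BK [OK [WK HW]]]]]].
  destruct (good_goodK B W' Hs gW') as [O' [K' [BO' [BK' [OK' [WK' HW']]]]]].
  exists (fun y => exists k, O k y /\ Kc K' k y), (fun y => exists k, O' k y /\ Kc K k y).
  split; [exists (fun k y => O k y /\ Kc K' k y); split; [intros n; apply Hr; auto; apply Kc_B; auto| intros y; tauto]|].
  split; [exists (fun k y => O' k y /\ Kc K k y); split; [intros n; apply Hr; auto; apply Kc_B; auto| intros y; tauto]|].
  split; [|split].
  - intros y [k [Ok Kk]] [m [Om Km]]. destruct (Nat.le_ge_cases k m) as [h|h].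
    + exact (OK k y Ok (Kc_spec K m y Km k h)).
    + exact (OK' m y Om (Kc_spec K' k y Kk m h)).
  - intros y. destruct (classic (W' y)) as [h|h]; [right; auto|left].
    assert (Wy : W y) by (destruct (Hc y); tauto).
    destruct (proj1 (HW y) Wy) as [k hk]. exists k; split; auto.
    apply Kc_intro. intros j. destruct (WK' j y); tauto.
  - intros y. destruct (classic (W y)) as [h|h]; [right; auto|left].
    assert (Wy : W' y) by (destruct (Hc y); tauto).
    destruct (proj1 (HW' y) Wy) as [k hk]. exists k; split; auto.
    apply Kc_intro. intros j. destruct (WK j y); tauto.
Qed.

Definition pr (Y : Type) := ((Y -> Prop) * (Y -> Prop))%type.
Definition midhyp {Y} (B : (Y->Prop)->Prop) (p q : pr Y) :=
  ringB B /\ seqB B /\ good B (snd p) /\ good B (fst q) /\ (forall y, snd p y \/ fst q y).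
Definition midspec {Y} (B : (Y->Prop)->Prop) (p q r : pr Y) :=
  good B (fst r) /\ good B (snd r) /\ (forall y, fst r y -> snd r y -> False) /\
  (forall y, snd p y \/ fst r y) /\ (forall y, snd r y \/ fst q y).

Lemma mid_ex {Y} (B : (Y->Prop)->Prop) p q : exists r, midhyp B p q -> midspec B p q r.
Proof.
  destruct (classic (midhyp B p q)) as [[Hr [Hs [h1 [h2 h3]]]]|hn].
  - destruct (interp B (fst q) (snd p) Hr Hs h2 h1) as [G [H [gG [gH [dj [c1 c2]]]]]].
    { intros y; destruct (h3 y); auto. }
    exists (G, H). intros _. unfold midspec; simpl. repeat split; auto.
    intros y; destruct (c1 y); auto.
  - exists p; intros h; contradiction.
Qed.

Definition mid {Y} (B : (Y->Prop)->Prop) p q : pr Y :=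
  proj1_sig (constructive_indefinite_description _ (mid_ex B p q)).

Lemma mid_spec {Y} (B : (Y->Prop)->Prop) p q : midhyp B p q -> midspec B p q (mid B p q).
Proof. unfold mid. destruct (constructive_indefinite_description _ _) as [r hr]; auto. Qed.

Fixpoint lev {Y} (B : (Y->Prop)->Prop) (p0 p1 : pr Y) (n k : nat) {struct n} : pr Y :=
  match n with
  | O => if Nat.eqb k 0 then p0 else p1
  | S n' => if Nat.even k then lev B p0 p1 n' (Nat.div2 k)
            else mid B (lev B p0 p1 n' (Nat.div2 k)) (lev B p0 p1 n' (S (Nat.div2 k)))
  end.

Lemma lev_even {Y} B (p0 p1 : pr Y) n k : lev B p0 p1 (S n) (2 * k) = lev B p0 p1 n k.
Proof. change (lev B p0 p1 (S n) (2*k)) with (if Nat.even (2*k) then lev B p0 p1 n (Nat.div2 (2*k)) else mid B (lev B p0 p1 n (Nat.div2 (2*k))) (lev B p0 p1 n (S (Nat.div2 (2*k))))). rewrite Nat.even_even, Nat.div2_double. reflexivity. Qed.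

Lemma lev_odd {Y} B (p0 p1 : pr Y) n k :
  lev B p0 p1 (S n) (2 * k + 1) = mid B (lev B p0 p1 n k) (lev B p0 p1 n (S k)).
Proof. change (lev B p0 p1 (S n) (2*k+1)) with (if Nat.even (2*k+1) then lev B p0 p1 n (Nat.div2 (2*k+1)) else mid B (lev B p0 p1 n (Nat.div2 (2*k+1))) (lev B p0 p1 n (S (Nat.div2 (2*k+1))))). rewrite Nat.even_odd, Nat.div2_odd'. reflexivity. Qed.

Lemma lev_lift {Y} B (p0 p1 : pr Y) n m k :
  lev B p0 p1 (n + m) (k * 2 ^ m) = lev B p0 p1 n k.
Proof.
  induction m.
  - rewrite Nat.add_0_r, Nat.mul_1_r; reflexivity.
  - rewrite Nat.add_succ_r. replace (k * 2 ^ S m)%nat with (2 * (k * 2 ^ m))%nat.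
    + rewrite lev_even; auto.
    + rewrite Nat.pow_succ_r'; lia.
Qed.

Definition Inv {Y} (B : (Y->Prop)->Prop) (L : nat -> nat -> pr Y) (n : nat) :=
  (forall k, (k <= 2 ^ n)%nat -> good B (fst (L n k)) /\ good B (snd (L n k)) /\
     (forall y, fst (L n k) y -> snd (L n k) y -> False)) /\
  (forall k, (k < 2 ^ n)%nat -> forall y, snd (L n k) y \/ fst (L n (S k)) y).

Lemma inv_all {Y} B (p0 p1 : pr Y) : ringB B -> seqB B ->
  good B (fst p0) -> good B (snd p0) -> (forall y, fst p0 y -> snd p0 y -> False) ->
  good B (fst p1) -> good B (snd p1) -> (forall y, fst p1 y -> snd p1 y -> False) ->
  (forall y, snd p0 y \/ fst p1 y) ->
  forall n, Inv B (lev B p0 p1) n.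
Proof.
  intros Hr Hs a1 a2 a3 b1 b2 b3 c n. induction n as [|n [IH1 IH2]].
  - split.
    + intros k hk. simpl in hk. destruct k as [|[|k]]; simpl; auto; lia.
    + intros k hk. simpl in hk. replace k with 0%nat by lia. simpl. auto.
  - assert (Hm : forall j, (j < 2 ^ n)%nat -> midspec B (lev B p0 p1 n j) (lev B p0 p1 n (S j))
                         (mid B (lev B p0 p1 n j) (lev B p0 p1 n (S j)))).
    { intros j hj. apply mid_spec. split; [exact Hr|split; [exact Hs|split; [|split]]].
      - apply IH1; lia.
      - apply IH1; lia.
      - apply IH2; lia. }
    assert (E : forall n, (2 ^ S n = 2 * 2 ^ n)%nat) by (intros; rewrite Nat.pow_succ_r'; lia).
    split.
    + intros k hk. rewrite E in hk. destruct (Nat.Even_or_Odd k) as [[j ->]|[j ->]].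
      * rewrite lev_even. apply IH1; lia.
      * rewrite lev_odd. destruct (Hm j ltac:(lia)) as [h1 [h2 [h3 _]]]. auto.
    + intros k hk y. rewrite E in hk. destruct (Nat.Even_or_Odd k) as [[j ->]|[j ->]].
      * rewrite lev_even. replace (S (2 * j)) with (2 * j + 1)%nat by lia. rewrite lev_odd.
        destruct (Hm j ltac:(lia)) as [_ [_ [_ [h4 _]]]]. apply h4.
      * rewrite lev_odd. replace (S (2 * j + 1)) with (2 * S j)%nat by lia. rewrite lev_even.
        destruct (Hm j ltac:(lia)) as [_ [_ [_ [_ h5]]]]. apply h5.
Qed.

Lemma G_mono {Y} B (L : nat -> nat -> pr Y) n i j y : Inv B L n -> (i <= j)%nat -> (j <= 2 ^ n)%nat ->
  fst (L n i) y -> fst (L n j) y.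
Proof.
  intros [I1 I2] hij hj hy. induction j.
  - replace i with 0%nat in hy by lia; auto.
  - destruct (Nat.eq_dec i (S j)) as [<-|hne]; auto.
    assert (h : fst (L n j) y) by (apply IHj; lia).
    destruct (I2 j ltac:(lia) y) as [h'|h']; auto.
    exfalso; apply (proj2 (proj2 (I1 j ltac:(lia))) y h h').
Qed.

Definition dv (n k : nat) : R := INR k / 2 ^ n.

Lemma INR_pow2 n : INR (2 ^ n)%nat = 2 ^ n.
Proof. rewrite pow_INR. replace (INR 2) with 2 by (simpl; lra). reflexivity. Qed.

Lemma pow2_pos n : 0 < 2 ^ n.
Proof. apply pow_lt; lra. Qed.

Lemma dv_lift n m k : dv (n + m) (k * 2 ^ m) = dv n k.
Proof.
  unfold dv. rewrite mult_INR, INR_pow2, pow_add. field.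
  split; apply Rgt_not_eq, pow2_pos.
Qed.

Lemma dv_le N a b : (a <= b)%nat -> dv N a <= dv N b.
Proof.
  intros h. unfold dv, Rdiv. apply Rmult_le_compat_r.
  - left; apply Rinv_0_lt_compat, pow2_pos.
  - apply le_INR; auto.
Qed.

Lemma dv_lt_nat N a b : dv N a < dv N b -> (a < b)%nat.
Proof.
  intros h. destruct (Nat.lt_ge_cases a b) as [h'|h']; auto.
  apply dv_le with (N := N) in h'. lra.
Qed.

Lemma dv_bounds n k : (k <= 2 ^ n)%nat -> 0 <= dv n k <= 1.
Proof.
  intros h. split.
  - unfold dv, Rdiv. apply Rmult_le_pos; [apply pos_INR|left; apply Rinv_0_lt_compat, pow2_pos].
  - replace 1 with (dv n (2 ^ n)) by (unfold dv; rewrite INR_pow2; field; apply Rgt_not_eq, pow2_pos).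
    apply dv_le; auto.
Qed.

Definition Ey {Y} (L : nat -> nat -> pr Y) (y : Y) (r : R) : Prop :=
  r = 0 \/ exists n k, (k <= 2 ^ n)%nat /\ r = dv n k /\ ~ fst (L n k) y.

Lemma Ey_bound {Y} (L : nat -> nat -> pr Y) y : bound (Ey L y).
Proof.
  exists 1. intros r [->|[n [k [hk [-> _]]]]]; [lra|apply dv_bounds; auto].
Qed.

Lemma Ey_ne {Y} (L : nat -> nat -> pr Y) y : exists r, Ey L y r.
Proof. exists 0; left; auto. Qed.

Definition fU {Y} (L : nat -> nat -> pr Y) (y : Y) : R :=
  proj1_sig (completeness (Ey L y) (Ey_bound L y) (Ey_ne L y)).

Lemma fU_lub {Y} (L : nat -> nat -> pr Y) y : is_lub (Ey L y) (fU L y).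
Proof. unfold fU. destruct (completeness _ _ _); auto. Qed.

Section F.
Lemma fU_range {Y} (L : nat -> nat -> pr Y) y : 0 <= fU L y <= 1.
Proof.
  split.
  - apply (proj1 (fU_lub L y)). left; auto.
  - apply (proj2 (fU_lub L y)). intros r [->|[n [k [hk [-> _]]]]]; [lra|apply dv_bounds; auto].
Qed.

Lemma F1 {Y} B (L : nat -> nat -> pr Y) (HI : forall n, Inv B L n)
  (HL : forall n m k, L (n + m)%nat (k * 2 ^ m)%nat = L n k) n k y :
  (k <= 2 ^ n)%nat -> fst (L n k) y -> fU L y <= dv n k.
Proof.
  intros hk hy. apply (proj2 (fU_lub L y)).
  intros r [->|[n' [k' [hk' [-> hn]]]]]; [apply dv_bounds; auto|].
  apply Rnot_lt_le; intro hlt.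
  pose proof (dv_lift n n' k) as e1. pose proof (dv_lift n' n k') as e2.
  rewrite (Nat.add_comm n' n) in e2.
  assert (hlt' : dv (n + n') (k * 2 ^ n') < dv (n + n') (k' * 2 ^ n)) by lra.
  apply dv_lt_nat in hlt'. apply hn.
  rewrite <- (HL n' n k'). rewrite (Nat.add_comm n' n).
  apply (G_mono B L (n + n') (k * 2 ^ n') (k' * 2 ^ n) y (HI _)); [lia| |].
  - rewrite Nat.pow_add_r. rewrite (Nat.mul_comm (2 ^ n)). apply Nat.mul_le_mono_r; auto.
  - rewrite HL; auto.
Qed.

Lemma F2 {Y} (L : nat -> nat -> pr Y) n k y :
  (k <= 2 ^ n)%nat -> ~ fst (L n k) y -> dv n k <= fU L y.
Proof. intros hk hy. apply (proj1 (fU_lub L y)). right; exists n, k; auto. Qed.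

Lemma F3 {Y} B (L : nat -> nat -> pr Y) (HI : forall n, Inv B L n) n k y :
  (k <= 2 ^ n)%nat -> snd (L n k) y -> dv n k <= fU L y.
Proof.
  intros hk hy. apply F2; auto. intros h. exact (proj2 (proj2 (proj1 (HI n) k hk)) y h hy).
Qed.

Lemma F4 {Y} B (L : nat -> nat -> pr Y) (HI : forall n, Inv B L n)
  (HL : forall n m k, L (n + m)%nat (k * 2 ^ m)%nat = L n k) n k y :
  (k < 2 ^ n)%nat -> ~ snd (L n k) y -> fU L y <= dv n (S k).
Proof.
  intros hk hy. apply (F1 B L HI HL); [lia|]. destruct (proj2 (HI n) k hk y); tauto.
Qed.
End F.

Lemma INR_lt_pow2 N : INR N < 2 ^ N.
Proof.
  induction N.
  - simpl; lra.
  - rewrite S_INR. simpl pow. pose proof (pow_R1_Rle 2 N ltac:(lra)). lra.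
Qed.

Lemma floor_nat N s : 0 <= s < INR N -> exists m, INR m <= s < INR m + 1.
Proof.
  induction N; intros [h1 h2].
  - simpl in h2; lra.
  - rewrite S_INR in h2. destruct (Rlt_or_le s (INR N)) as [h|h].
    + apply IHN; lra.
    + exists N; lra.
Qed.

Lemma fU_cont {Y} B (L : nat -> nat -> pr Y) (Hr : ringB B) (HI : forall n, Inv B L n)
  (HL : forall n m k, L (n + m)%nat (k * 2 ^ m)%nat = L n k) A :
  open_set A -> isOpen B (fun y => A (fU L y)).
Proof.
  intros HA y Ay. destruct (HA _ Ay) as [d Hd].
  destruct (INR_archimed d 2 (cond_pos d)) as [N HN].
  pose proof (INR_lt_pow2 N) as HP.
  set (n := S N).
  set (e := / 2 ^ n).
  assert (p : 0 < 2 ^ n) by apply pow2_pos.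
  assert (he : e * 2 ^ n = 1) by (unfold e; field; lra).
  assert (epos : 0 < e) by (unfold e; apply Rinv_0_lt_compat; auto).
  assert (h4 : 4 < d * 2 ^ n).
  { unfold n; simpl pow. pose proof (cond_pos d). nra. }
  assert (he4 : 4 * e < d).
  { apply (Rmult_lt_reg_r (2 ^ n)); auto. rewrite Rmult_assoc, he. lra. }
  set (t := fU L y).
  destruct (fU_range L y) as [t0 t1]. fold t in t0, t1.
  destruct (floor_nat (2 ^ n + 1)%nat (t * 2 ^ n)) as [m [hm1 hm2]].
  { split; [nra|]. rewrite plus_INR, INR_pow2. simpl (INR 1). nra. }
  assert (dvE : forall j, dv n j = INR j * e) by (intros; unfold dv, Rdiv, e; auto).
  assert (ht1 : INR m * e <= t).
  { replace t with (t * 2 ^ n * e) by (rewrite Rmult_assoc, (Rmult_comm (2^n)), he; ring). nra. }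
  assert (ht2 : t < (INR m + 1) * e).
  { replace t with (t * 2 ^ n * e) by (rewrite Rmult_assoc, (Rmult_comm (2^n)), he; ring). nra. }
  assert (hm2n : (m <= 2 ^ n)%nat).
  { apply INR_le. rewrite INR_pow2. nra. }
  set (Nb := fun z => ((m + 1 <= 2 ^ n)%nat -> fst (L n (S m)) z) /\
                      ((2 <= m)%nat -> snd (L n (m - 2)%nat) z)).
  assert (HN1 : forall z, Nb z -> A (fU L z)).
  { intros z [c1 c2]. apply Hd. unfold disc. fold t.
    assert (up : fU L z <= (INR m + 1) * e).
    { destruct (Compare_dec.le_lt_dec (m + 1)%nat (2 ^ n)%nat) as [h|h].
      - rewrite <- S_INR, <- dvE. apply (F1 B L HI HL); auto; lia.
      - destruct (fU_range L z). assert (INR (2 ^ n) <= INR m + 1).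
        { rewrite <- S_INR. apply le_INR; lia. }
        rewrite INR_pow2 in H1. nra. }
    assert (lo : (INR m - 2) * e <= fU L z).
    { destruct (Compare_dec.le_lt_dec 2%nat m) as [h|h].
      - replace (INR m - 2) with (INR (m - 2)%nat) by (rewrite minus_INR; auto; simpl; lra).
        rewrite <- dvE. apply (F3 B L HI n); auto; lia.
      - destruct (fU_range L z). assert (INR m <= 1) by (replace 1 with (INR 1) by reflexivity; apply le_INR; lia).
        nra. }
    apply Rabs_def1; lra. }
  assert (HG : (m + 1 <= 2 ^ n)%nat -> fst (L n (S m)) y).
  { intros h. apply NNPP; intros hn. apply F2 in hn; [|lia]. rewrite dvE, S_INR in hn. fold t in hn. lra. }
  assert (HH : (2 <= m)%nat -> snd (L n (m - 2)%nat) y).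
  { intros h. apply NNPP; intros hn. apply (F4 B L HI HL) in hn; [|lia].
    rewrite dvE in hn. replace (INR (S (m - 2)%nat)) with (INR m - 1) in hn.
    - fold t in hn. nra.
    - replace (S (m - 2)%nat) with (m - 1)%nat by lia. rewrite minus_INR by lia. simpl; lra. }
  assert (Hb : exists b, B b /\ b y /\ forall z, b z -> Nb z).
  { destruct (Compare_dec.le_lt_dec (m + 1)%nat (2 ^ n)%nat) as [c1|c1]; destruct (Compare_dec.le_lt_dec 2%nat m) as [c2|c2].
    - destruct (good_open B _ (proj1 (proj1 (HI n) (S m) ltac:(lia))) y (HG c1)) as [b1 [Bb1 [b1y Hb1]]].
      destruct (good_open B _ (proj1 (proj2 (proj1 (HI n) (m - 2)%nat ltac:(lia)))) y (HH c2)) as [b2 [Bb2 [b2y Hb2]]].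
      exists (fun z => b1 z /\ b2 z). split; [apply (Hr _ _ Bb1 Bb2)|]. split; auto.
      intros z [z1 z2]. split; intros; auto.
    - destruct (good_open B _ (proj1 (proj1 (HI n) (S m) ltac:(lia))) y (HG c1)) as [b1 [Bb1 [b1y Hb1]]].
      exists b1. split; auto. split; auto. intros z z1; split; intros; auto; lia.
    - destruct (good_open B _ (proj1 (proj2 (proj1 (HI n) (m - 2)%nat ltac:(lia)))) y (HH c2)) as [b2 [Bb2 [b2y Hb2]]].
      exists b2. split; auto. split; auto. intros z z2; split; intros; auto; lia.
    - exfalso. assert (2 ^ n = 2 * 2 ^ N)%nat by (unfold n; rewrite Nat.pow_succ_r'; auto).
      assert (2 ^ N <> 0)%nat by (apply Nat.pow_nonzero; lia). lia. }
  destruct Hb as [b [Bb [hb Hbz]]]. exists b; split; [auto|split; [auto|intros z hz; apply HN1, Hbz, hz]].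
Qed.

Lemma urysohn {Y} (B : (Y->Prop)->Prop) b x : ringB B -> seqB B -> B b -> b x ->
  exists f : Y -> R, (forall A, open_set A -> isOpen B (fun y => A (f y))) /\
    (forall y, 0 <= f y <= 1) /\ f x = 0 /\ (forall y, ~ b y -> f y = 1).
Proof.
  intros Hr Hs Bb bx.
  destruct (Hs b Bb) as [U [V [BU [BV [h1 [h2 h3]]]]]].
  destruct (proj1 (h3 x) bx) as [m hm].
  set (p0 := (U m, V m)). set (p1 := (U (S m), V (S m))).
  set (L := lev B p0 p1).
  assert (HI : forall n, Inv B L n).
  { apply inv_all; simpl; auto using good_B.
    - intros y a c; exact (h1 m y a c).
    - intros y a c; exact (h1 (S m) y a c).
    - intros y. destruct (classic (V m y)); auto. }
  assert (HL : forall n m k, L (n + m)%nat (k * 2 ^ m)%nat = L n k) by (intros; apply lev_lift).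
  exists (fU L). split; [apply (fU_cont B L Hr HI HL)|]. split; [apply fU_range|]. split.
  - assert (h : fU L x <= dv 0 0) by (apply (F1 B L HI HL); simpl; auto).
    unfold dv in h. simpl in h. pose proof (fU_range L x). lra.
  - intros y hy. assert (h : dv 0 1 <= fU L y).
    { apply F2; simpl; auto. intros hu. apply hy, h3. eauto. }
    unfold dv in h. simpl in h. pose proof (fU_range L y). lra.
Qed.

Lemma sep' {Y} (B : (Y->Prop)->Prop) y z : seqB B -> sepB B -> y <> z ->
  exists b, B b /\ b z /\ ~ b y.
Proof.
  intros Hs Hp hne. destruct (Hp y z hne) as [b [Bb hb]].
  destruct (classic (b z)) as [bz|bz].
  - exists b; repeat split; auto. intros by'. apply hb; tauto.
  - assert (byy : b y) by (apply NNPP; intro; apply hb; tauto).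
    destruct (Hs b Bb) as [U [V [BU [BV [h1 [h2 h3]]]]]].
    destruct (proj1 (h3 y) byy) as [n hn].
    exists (V n). split; auto. split.
    + apply NNPP; intro hv. apply bz, h3. exists (S n); auto.
    + apply h1; auto.
Qed.

Theorem abs_main {Y} (B : (Y->Prop)->Prop) : ringB B -> seqB B -> sepB B -> completely_regular (Oabs B).
Proof.
  intros Hr Hs Hp. split.
  - intros y. apply Oabs_of. right. intros z hz.
    destruct (sep' B y z Hs Hp (fun e => hz (eq_sym e))) as [b [Bb [bz nby]]].
    exists b; split; auto. split; auto. intros w bw e; subst; auto.
  - intros F x HO Fx. destruct (Oabs_T0 B _ Hr HO) as [Hfull|Ho].
    + exists (fun _ => 0). split.
      * intros A _. apply Oabs_of. destruct (classic (A 0)); [left; auto|right; intros y hy; contradiction].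
      * split; [intros; lra|]. split; auto. intros y Fy; exfalso; exact (Hfull y Fy).
    + destruct (Ho x Fx) as [b [Bb [bx Hb]]].
      destruct (urysohn B b x Hr Hs Bb bx) as [f [f1 [f2 [f3 f4]]]].
      exists f. split; [intros A hA; apply Oabs_of; right; auto|]. split; auto. split; auto.
      intros y Fy. apply f4. intros hb. exact (Hb y hb Fy).
Qed.

Section Q.
Definition Bq {X : Type} (P : (X->Prop)->Prop) : (quot P -> Prop) -> Prop :=
  fun S => exists V, P V /\ S = qimage P V.

Lemma exist_eq {X} (P : (X->Prop)->Prop) (C D : X -> Prop) p q :
  C = D -> (exist _ C p : quot P) = exist _ D q.
Proof. intros ->. f_equal. apply proof_irrelevance. Qed.

Lemma q_surj {X} (P : (X->Prop)->Prop) (c : quot P) : exists x, c = qmap P x.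
Proof. destruct c as [C [x e]]. exists x. unfold qmap. apply exist_eq; auto. Qed.

Lemma qim_iff {X} (P : (X->Prop)->Prop) V x : P V -> (qimage P V (qmap P x) <-> V x).
Proof.
  intros PV. split.
  - intros [x' [Vx' e]]. assert (e' : cls P x = cls P x') by (apply (f_equal (@proj1_sig _ _)) in e; auto).
    assert (h : cls P x' x') by (intros W _; tauto). rewrite <- e' in h. apply (h V PV); auto.
  - intros Vx. exists x; auto.
Qed.

Lemma set_ext {Y} (S1 S2 : Y -> Prop) : (forall c, S1 c <-> S2 c) -> S1 = S2.
Proof. intros h; extensionality c; apply propositional_extensionality; auto. Qed.

Lemma Bq_ring {X} (P : (X->Prop)->Prop) : ring_of_sets P -> ringB (Bq P).
Proof.
  intros HR a b [V1 [P1 ->]] [V2 [P2 ->]]. destruct (HR V1 V2 P1 P2) as [Pi Pu]. split.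
  - exists (fun x => V1 x /\ V2 x); split; auto. apply set_ext; intros c.
    destruct (q_surj P c) as [x ->].
    pose proof (qim_iff P V1 x P1). pose proof (qim_iff P V2 x P2). pose proof (qim_iff P _ x Pi). tauto.
  - exists (fun x => V1 x \/ V2 x); split; auto. apply set_ext; intros c.
    destruct (q_surj P c) as [x ->].
    pose proof (qim_iff P V1 x P1). pose proof (qim_iff P V2 x P2). pose proof (qim_iff P _ x Pu). tauto.
Qed.

Lemma Bq_seq {X} (P : (X->Prop)->Prop) : (forall V, P V -> P_seq P V) -> seqB (Bq P).
Proof.
  intros HS S [V [PV ->]]. destruct (HS V PV) as [U [W [PU [PW [h1 [h2 h3]]]]]].
  exists (fun n => qimage P (U n)), (fun n => qimage P (W n)).
  split; [intros n; exists (U n); auto|]. split; [intros n; exists (W n); auto|].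
  split; [|split].
  - intros k c. destruct (q_surj P c) as [x ->]. rewrite (qim_iff P _ x (PU k)), (qim_iff P _ x (PW k)). apply h1.
  - intros k c. destruct (q_surj P c) as [x ->]. rewrite (qim_iff P _ x (PU (S k))), (qim_iff P _ x (PW k)). apply h2.
  - intros c. destruct (q_surj P c) as [x ->]. rewrite (qim_iff P _ x PV). rewrite h3.
    split; intros [n hn]; exists n; [apply (qim_iff P _ x (PU n))|apply (qim_iff P _ x (PU n))]; auto.
Qed.

Lemma Bq_sep {X} (P : (X->Prop)->Prop) : sepB (Bq P).
Proof.
  intros c d hne. destruct (q_surj P c) as [x ->]. destruct (q_surj P d) as [x' ->].
  apply NNPP; intro H. apply hne. unfold qmap. apply exist_eq.
  assert (HV : forall V, P V -> (V x <-> V x')).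
  { intros V PV. apply NNPP; intro hn. apply H. exists (qimage P V). split; [exists V; auto|].
    rewrite (qim_iff P _ x PV), (qim_iff P _ x' PV). auto. }
  apply set_ext; intros y. unfold cls. split; intros h V PV; specialize (HV V PV); specialize (h V PV); tauto.
Qed.

Lemma Q_Oabs {X} (P : (X->Prop)->Prop) U : Q_open P U <-> Oabs (Bq P) U.
Proof.
  unfold Q_open, Oabs. split; intros H T HT HB; apply H; auto.
  - intros V PV; apply HB; exists V; auto.
  - intros S [V [PV ->]]; auto.
Qed.
End Q.

Theorem theorem5 (X : Type) (P : (X -> Prop) -> Prop) :
  ring_of_sets P ->
  (forall V, P V -> P_seq P V) ->
  completely_regular (Q_open P).
Proof.
  intros HR HS. destruct (abs_main (Bq P) (Bq_ring P HR) (Bq_seq P HS) (Bq_sep P)) as [c1 c2].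
  split.
  - intros y; apply Q_Oabs; auto.
  - intros F x HO Fx. destruct (c2 F x (proj1 (Q_Oabs P _) HO) Fx) as [f [h1 h2]].
    exists f; split; [intros A hA; apply Q_Oabs, h1, hA|exact h2].
Qed.
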